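(* Let $\mathcal{R}$ be a finite valuation ring with residue field of cardinality $q$ and with uniformizer of nilpotency degree $r$ (so $|\mathcal{R}|=q^r$), and let $\mathcal{R}^*$ denote its group of units. Let $G$ be a subgroup of $\mathcal{R}^*$, let $g,h\colon G\to\mathcal{R}^*$ be arbitrary functions, and define $f\colon G\times\mathcal{R}^*\to\mathcal{R}$ by $f(x,y)=g(x)(h(x)+y)$. Put $m=\mu(g)$. Then there is a constant $c>0$ depending only on $r$ such that for all sets $A\subset G$ and $B,C\subset\mathcal{R}^*$, \[|f(A,B)|\,|B+C|\ \ge\ c\min\left\{\frac{q^r|B|}{m},\ \frac{|A||B|^2|C|}{m^2q^{2r-1}}\right\}.\]
   Context: A finite valuation ring is a finite commutative ring with identity that is local (has a unique maximal ideal) and principal (every ideal is principal); its maximal ideal is generated by a non-unit $z$ (a uniformizer), the residue field $\mathcal{R}/(z)$ has $q$ elements, and $r$ is the least integer with $z^r=0$. For a function $\varphi\colon G\to\mathcal{R}$, $\mu(\varphi)=\max_{t\in\mathcal{R}}|\{x\in G:\varphi(x)=t\}|$. Notation: $f(A,B)=\{f(x,y):x\in A,y\in B\}$ and $B+C=\{b+c:b\in B,c\in C\}$. *)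

(* Defs.v *)
From mathcomp Require Import all_boot all_order all_algebra all_fingroup.
Set Implicit Arguments. Unset Strict Implicit. Unset Printing Implicit Defensive.
Import Order.TTheory GRing.Theory Num.Theory.
Local Open Scope ring_scope.

Section ValRing.
Variable R : finComUnitRingType.

Definition is_ideal (I : {set R}) : Prop :=
  [/\ 0 \in I,
      (forall x y, x \in I -> y \in I -> x + y \in I) &
      (forall a x, x \in I -> a * x \in I)].

Definition pideal (x : R) : {set R} := [set a * x | a : R].

Definition is_principal (I : {set R}) : Prop := exists x : R, I = pideal x.

Definition is_maximal_ideal (I : {set R}) : Prop :=
  [/\ is_ideal I, I != [set: R] &
      (forall J, is_ideal J -> I \subset J -> J = I \/ J = [set: R])].

Definition is_local : Prop :=
  exists M, is_maximal_ideal M /\ forall J, is_maximal_ideal J -> J = M.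

Definition is_principal_ring : Prop :=
  forall I, is_ideal I -> is_principal I.

Definition finite_valuation_ring : Prop := is_local /\ is_principal_ring.

Definition uniformizer (z : R) : Prop :=
  z \isn't a GRing.unit /\ is_maximal_ideal (pideal z).

Definition nilp_degree (z : R) (r : nat) : Prop :=
  z ^+ r = 0 /\ forall k, (k < r)%N -> z ^+ k != 0.

(* cardinality of the residue ring R/(z): the number of cosets of (z) *)
Definition residue_card (z : R) : nat :=
  #|[set [set x + y | y in pideal z] | x : R]|.

Definition mu (G : {set {unit R}}) (phi : {unit R} -> R) : nat :=
  \max_(t : R) #|[set x in G | phi x == t]|.

Definition fimage (g h : {unit R} -> {unit R}) (A B : {set {unit R}}) : {set R} :=
  [set (val (g x)) * (val (h x) + val y) | x in A, y in B].

Definition sumset (B C : {set {unit R}}) : {set R} :=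
  [set val b + val c | b in B, c in C].

End ValRing.

(* Main.v *)
Require Import Defs.
From mathcomp Require Import all_boot all_order all_algebra all_fingroup.
From mathcomp Require Import ring lra zify.
From Stdlib Require Import Classical.
Set Implicit Arguments. Unset Strict Implicit. Unset Printing Implicit Defensive.
Import Order.TTheory GRing.Theory Num.Theory.

Module MP1.
Local Open Scope ring_scope.

Lemma card_fibers (T U : finType) (f : T -> U) (D : {set T}) k :
  (forall x, x \in D -> #|[set y in D | f y == f x]| = k) ->
  #|D| = (#|f @: D| * k)%N.
Proof.
move=> H; rewrite -sum1_card (partition_big_imset f) -sum_nat_const.
apply: eq_bigr => j /imsetP [x Hx ->].
by rewrite sum1dep_card -(H x Hx).
Qed.

Lemma sum_bool_card (T : finType) (D : {pred T}) (P : pred T) :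
  (\sum_(x in D) (P x : nat) = #|[set x in D | P x]|)%N.
Proof.
rewrite -sum1dep_card big_mkcondr /=; apply: eq_bigr => x _.
by case: (P x).
Qed.

Section Ring.
Variable R : finComUnitRingType.

Lemma pidealP (x y : R) : reflect (exists a, y = a * x) (y \in pideal x).
Proof.
by apply: (iffP imsetP) => [[a _ ->]|[a ->]]; exists a.
Qed.

Lemma pideal_ideal (x : R) : is_ideal (pideal x).
Proof.
split.
- by apply/pidealP; exists 0; rewrite mul0r.
- move=> u v /pidealP [a ->] /pidealP [b ->]; apply/pidealP; exists (a + b).
  by rewrite mulrDl.
- move=> c u /pidealP [a ->]; apply/pidealP; exists (c * a); by rewrite mulrA.
Qed.

Lemma pidealB (x u v : R) : u \in pideal x -> v \in pideal x -> u - v \in pideal x.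
Proof.
move=> /pidealP [a ->] /pidealP [b ->]; apply/pidealP; exists (a - b).
by rewrite mulrBl.
Qed.

Lemma pideal0 (x : R) : 0 \in pideal x.
Proof. by case: (pideal_ideal x). Qed.

Lemma exists_max_ideal n (J : {set R}) : (#|R| - #|J| < n)%N ->
  is_ideal J -> J != setT -> exists M, is_maximal_ideal M /\ J \subset M.
Proof.
elim: n J => [//|n IH] J Hn HJ HT.
case: (classic (forall J', is_ideal J' -> J \subset J' -> J' = J \/ J' = setT)) => Hc.
  by exists J; split.
have [J' HJ'] := not_all_ex_not _ _ Hc.
have [HJ'i [HJJ' HJ'n]] : is_ideal J' /\ J \subset J' /\ J' <> J /\ J' <> setT.
  by apply: NNPP => Hn'; apply: HJ' => HJ1 HJ2; apply: NNPP => Hn''; apply: Hn'; tauto.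
have Hpr : J \proper J'.
  by rewrite properEneq HJJ' andbT; apply/eqP => E; apply: HJ'n.1; rewrite E.
have Hc1 := proper_card Hpr.
have Hc2 : (#|J'| <= #|R|)%N by rewrite -cardsT subset_leq_card ?subsetT.
have [M [HM HsM]] := IH J' ltac:(lia) HJ'i ltac:(apply/eqP; exact: HJ'n.2).
by exists M; split => //; apply: subset_trans HsM.
Qed.

Variable z : R.
Hypothesis Hfv : finite_valuation_ring R.
Hypothesis Hu : uniformizer z.

Lemma nonunit_pideal (u : R) : u \isn't a GRing.unit -> u \in pideal z.
Proof.
move=> Hnu.
have Hp : pideal u != setT.
  apply/negP => /eqP E; move: (in_setT (1 : R)); rewrite -E => /pidealP [a Ha].
  by move/negP: Hnu; apply; apply/unitrPr; exists a; rewrite mulrC -Ha.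
have [M [HM HsM]] := exists_max_ideal (n := (#|R| - #|pideal u|).+1) (leqnn _)
  (pideal_ideal u) Hp.
case: Hfv => [[M0 [HM0 Huniq]] _].
have E1 := Huniq _ HM; have E2 := Huniq _ Hu.2.
rewrite E2 -E1; apply: (subsetP HsM).
by apply/pidealP; exists 1; rewrite mul1r.
Qed.

End Ring.

End MP1.
Import MP1.

Module MP2.
Local Open Scope ring_scope.

Section Card.
Variable R : finComUnitRingType.

Definition cosI (S : {set R}) (y : R) : {set R} := [set y + w | w in S].

Lemma mem_cos (x y w : R) : (w \in cosI (pideal x) y) = (w - y \in pideal x).
Proof.
apply/imsetP/idP => [[s Hs ->]|H].
  by rewrite (_ : y + s - y = s) //; ring.
by exists (w - y) => //; ring.
Qed.

Lemma cosE (x y y' : R) : (cosI (pideal x) y == cosI (pideal x) y') = (y - y' \in pideal x).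
Proof.
apply/eqP/idP => [E|H].
  by rewrite -mem_cos -E mem_cos subrr pideal0.
apply/setP => w; rewrite !mem_cos; apply/idP/idP => Hw.
  by rewrite (_ : w - y' = (w - y) - (- (y - y'))); [|ring]; rewrite pidealB // 
     (_ : - (y - y') = 0 - (y - y')); [|ring]; rewrite pidealB // pideal0.
by rewrite (_ : w - y = (w - y') - (y - y')); [|ring]; rewrite pidealB.
Qed.

Lemma card_cos (x y : R) : #|cosI (pideal x) y| = #|pideal x|.
Proof. by rewrite card_imset //; apply: addrI. Qed.

Variable z : R.
Hypothesis Hfv : finite_valuation_ring R.
Hypothesis Hu : uniformizer z.
Variable r : nat.
Hypothesis Hr : nilp_degree z r.

Definition Ij (j : nat) := pideal (z ^+ j).

Lemma Ij_sub j w : w \in Ij j.+1 -> w \in Ij j.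
Proof.
by move=> /pidealP [a ->]; apply/pidealP; exists (a * z); rewrite exprS; ring.
Qed.

Lemma card_resid : #|R| = (residue_card z * #|pideal z|)%N.
Proof.
rewrite /residue_card -cardsT (card_fibers (f := cosI (pideal z)) (k := #|pideal z|)).
  congr (_ * _)%N; apply: eq_card => S; apply/imsetP/imsetP => [[x _ ->]|[x _ ->]];
  by exists x.
move=> x _; rewrite -(card_cos z x); apply: eq_card => w.
by rewrite !inE cosE mem_cos.
Qed.

Lemma step j : (j < r)%N -> #|Ij j| = (residue_card z * #|Ij j.+1|)%N.
Proof.
move=> Hj.
pose Psi := fun a : R => cosI (Ij j.+1) (a * z ^+ j).
have HPsi : forall a a0, (Psi a == Psi a0) = (a - a0 \in pideal z).
  move=> a a0; rewrite /Psi cosE; apply/idP/idP.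
    move=> /pidealP [b Hb].
    have E : (a - a0 - b * z) * z ^+ j = 0.
      rewrite (_ : (a - a0 - b * z) * z ^+ j = (a * z ^+ j - a0 * z ^+ j) - b * (z * z ^+ j)); last by ring.
      by rewrite Hb exprS subrr.
    have Hnu : (a - a0 - b * z) \isn't a GRing.unit.
      apply/negP => Hun; case: Hr => _ /(_ j Hj) /negP; apply.
      by rewrite -(mulKr Hun (z ^+ j)) E mulr0.
    have := nonunit_pideal Hfv Hu Hnu => /pidealP [c Hc].
    apply/pidealP; exists (c + b); rewrite mulrDl -Hc; ring.
  move=> /pidealP [b Hb]; apply/pidealP; exists b.
  by rewrite -mulrBl Hb exprS; ring.
have E1 : #|R| = (#|Psi @: setT| * #|pideal z|)%N.
  rewrite -cardsT (card_fibers (f := Psi) (k := #|pideal z|)) // => a0 _.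
  rewrite -(card_cos z a0); apply: eq_card => w.
  by rewrite !inE HPsi mem_cos.
have E2 : cosI (Ij j.+1) @: Ij j = Psi @: setT.
  apply/setP => S; apply/imsetP/imsetP => [[y /pidealP [a ->] ->]|[a _ ->]].
    by exists a.
  by exists (a * z ^+ j) => //; apply/pidealP; exists a.
have E3 : #|Ij j| = (#|cosI (Ij j.+1) @: Ij j| * #|Ij j.+1|)%N.
  rewrite (card_fibers (f := cosI (Ij j.+1)) (k := #|Ij j.+1|)) // => y0 Hy0.
  rewrite -(card_cos (z ^+ j.+1) y0); apply: eq_card => w.
  rewrite inE cosE mem_cos; apply/idP/idP => [/andP [] //|H].
  rewrite H andbT.
  have -> : w = (w - y0) - (0 - y0) by ring.
  apply: pidealB; first exact: Ij_sub.
  by apply: pidealB => //; exact: pideal0.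
have Hpos : (0 < #|pideal z|)%N by apply/card_gt0P; exists 0; exact: pideal0.
have : residue_card z = #|Psi @: setT|.
  by apply/eqP; rewrite -(eqn_pmul2r Hpos) -card_resid E1.
by move=> ->; rewrite E3 E2.
Qed.

Lemma r_pos : (0 < r)%N.
Proof.
case: Hr; case: r => [|//]; rewrite expr0 => H _.
by move: (oner_neq0 R); rewrite H eqxx.
Qed.

Lemma card_Ij k : (k <= r)%N -> #|Ij (r - k)%N| = (residue_card z ^ k)%N.
Proof.
elim: k => [_|k IH Hk].
  rewrite subn0 expn0 /Ij; case: Hr => -> _.
  rewrite (_ : pideal 0 = [set 0]) ?cards1 //; apply/setP => w; rewrite !inE.
  by apply/pidealP/eqP => [[a ->]|->]; [rewrite mulr0|exists 0; rewrite mulr0].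
rewrite step; last by lia.
have -> : ((r - k.+1).+1 = r - k)%N by lia.
by rewrite IH ?expnS //; lia.
Qed.

Lemma cardR : #|R| = (residue_card z ^ r)%N.
Proof.
rewrite -card_Ij // subnn -cardsT; apply: eq_card => w; rewrite !inE.
by apply/esym/pidealP; exists w; rewrite expr0 mulr1.
Qed.

Lemma cardM : #|pideal z| = (residue_card z ^ r.-1)%N.
Proof.
have := card_Ij (k := r.-1) (leq_pred r).
have -> : (r - r.-1 = 1)%N by have := r_pos; lia.
by rewrite /Ij expr1.
Qed.

End Card.

End MP2.
Import MP2.

Module MP3.

Lemma sum_eq1 (T : finType) (e : T) : (\sum_(s : T) (s == e : nat) = 1)%N.
Proof. by rewrite (bigD1 e) //= eqxx big1 ?addn0 // => s /negPf ->. Qed.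

Lemma sum_eq2 (T : finType) (e e' : T) :
  (\sum_(s : T) ((s == e : nat) * (s == e' : nat)) = (e == e'))%N.
Proof. by rewrite (bigD1 e) //= eqxx mul1n big1 ?addn0 // => s /negPf ->. Qed.

Lemma sum_bool_card' (T : finType) (P : pred T) :
  (\sum_x (P x : nat) = #|[set x | P x]|)%N.
Proof. by rewrite -sum1dep_card [RHS]big_mkcond /=; apply: eq_bigr => x _; case: (P x). Qed.

Lemma big_setX' (T1 T2 : finType) (A : {set T1}) (C : {set T2}) (F : T1 * T2 -> nat) :
  (\sum_(l in setX A C) F l = \sum_(x in A) \sum_(c in C) F (x, c))%N.
Proof.
rewrite pair_big; apply: eq_big => [[a b]|[a b] _] //=.
by rewrite in_setX.
Qed.

Section Inc.
Variable R : finComUnitRingType.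
Variables (G : {group {unit R}}) (g h : {unit R} -> {unit R}) (A B C : {set {unit R}}).
Hypothesis HAG : A \subset G.
Variable z : R.
Hypothesis Hnu : forall u : R, u \isn't a GRing.unit -> u \in pideal z.

Local Open Scope ring_scope.

Definition Fl (x c : {unit R}) (t : R) : R := val (g x) * (val (h x) + t - val c).
Definition onl (l : {unit R} * {unit R}) (p : R * R) : bool := p.2 == Fl l.1 l.2 p.1.
Definition dg (p : R * R) : nat := (\sum_(l in setX A C) onl l p)%N.

Lemma line_card x c : (\sum_(p : R * R) onl (x, c) p = #|R|)%N.
Proof.
transitivity (\sum_(t : R) \sum_(s : R) (s == Fl x c t : nat))%N.
  by rewrite pair_big.
by rewrite -sum1_card; apply: eq_bigr => t _; rewrite sum_eq1.
Qed.

Lemma sum_dg : (\sum_p dg p = #|A| * #|C| * #|R|)%N.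
Proof.
rewrite /dg exchange_big /= -cardsX -sum_nat_const.
by apply: eq_bigr => [[x c]] _; rewrite line_card.
Qed.

Lemma inter_sum x c x' c' :
  (\sum_(p : R * R) (onl (x, c) p * onl (x', c') p) =
   \sum_(t : R) (Fl x c t == Fl x' c' t : nat))%N.
Proof.
transitivity (\sum_(t : R) \sum_(s : R)
   ((s == Fl x c t : nat) * (s == Fl x' c' t : nat)))%N.
  by rewrite pair_big.
by apply: eq_bigr => t _; rewrite sum_eq2.
Qed.

Lemma unit_case x c x' c' : val (g x) - val (g x') \is a GRing.unit ->
  (\sum_(t : R) (Fl x c t == Fl x' c' t : nat) <= 1)%N.
Proof.
move=> Hun; rewrite sum_bool_card'; apply/card_le1_eqP => t1 t2.
rewrite !inE => /eqP E1 /eqP E2.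
have E : (val (g x) - val (g x')) * (t1 - t2) = (val (g x) - val (g x')) * 0.
  rewrite mulr0 (_ : (val (g x) - val (g x')) * (t1 - t2) =
     (Fl x c t1 - Fl x' c' t1) - (Fl x c t2 - Fl x' c' t2)).
    by rewrite E1 E2 !subrr.
  by rewrite /Fl; ring.
by apply/esym/eqP; rewrite -subr_eq0; apply/eqP; exact: (mulrI Hun E).
Qed.

Lemma nonunit_case x c x' :
  (\sum_(c' in C) \sum_(t : R) (Fl x c t == Fl x' c' t : nat) <= #|R|)%N.
Proof.
rewrite exchange_big /= -sum1_card; apply: leq_sum => t _.
rewrite sum_bool_card; apply/card_le1_eqP => c1 c2.
rewrite !inE => /andP [_ /eqP E1] /andP [_ /eqP E2].
have : val (g x') * (val (h x') + t - val c1) = val (g x') * (val (h x') + t - val c2).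
  by rewrite /Fl in E1 E2; rewrite -E1 -E2.
move/(mulrI (valP (g x'))) => E; apply: val_inj.
by apply/esym; apply: (subrI (val (h x') + t)); exact: E.
Qed.

Definition mm := mu G (fun x => val (g x)).

Lemma nonunit_count x :
  (#|[set x' in A | (val (g x) - val (g x'))%R \notin GRing.unit]| <= mm * #|pideal z|)%N.
Proof.
set X' := [set x' in A | _].
pose f := fun x' : {unit R} => val (g x').
rewrite -sum1_card (partition_big_imset f).
apply: (@leq_trans (\sum_(v in f @: X') mm)).
  apply: leq_sum => v _; rewrite sum1dep_card.
  apply: (leq_trans _ (leq_bigmax v)) => /=.
  apply: subset_leq_card; apply/subsetP => y; rewrite !inE => /andP [/andP [Hy _] Hv].
  by rewrite (subsetP HAG _ Hy).
rewrite sum_nat_const mulnC leq_mul2l; apply/orP; right.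
have -> : #|pideal z| = #|[set val (g x) + w | w in pideal z]|.
  by rewrite (card_imset _ (addrI (val (g x)))).
apply: subset_leq_card; apply/subsetP => v /imsetP [y]; rewrite inE => /andP [_ Hy] ->.
apply/imsetP; exists (val (g y) - val (g x)); last by rewrite /f; ring.
have := Hnu Hy => H.
by rewrite (_ : val (g y) - val (g x) = 0 - (val (g x) - val (g y))); [rewrite pidealB // pideal0 | ring].
Qed.

Lemma sum_dg2 : (\sum_p dg p ^ 2 <=
   #|A| * #|C| * (#|A| * #|C| + #|R| * (mm * #|pideal z|)))%N.
Proof.
have -> : (\sum_p dg p ^ 2 = \sum_(l in setX A C) \sum_(l' in setX A C)
            \sum_(p : R * R) (onl l p * onl l' p))%N.
  transitivity (\sum_(p : R * R) \sum_(l in setX A C) \sum_(l' in setX A C)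
            (onl l p * onl l' p))%N.
    apply: eq_bigr => p _; rewrite /dg expnS expn1 big_distrl /=.
    by apply: eq_bigr => l _; rewrite big_distrr.
  rewrite exchange_big /=; apply: eq_bigr => l _.
  by rewrite exchange_big.
rewrite -cardsX -sum_nat_const; apply: leq_sum => [[x c]] Hxc.
rewrite big_setX' /=.
apply: (@leq_trans (\sum_(x' in A) (#|C| +
   ((val (g x) - val (g x'))%R \notin GRing.unit) * #|R|))%N).
  apply: leq_sum => x' _.
  case: (boolP (val (g x) - val (g x') \is a GRing.unit)) => Hun /=.
    rewrite addn0 -sum1_card; apply: leq_sum => c' _.
    by rewrite inter_sum unit_case.
  rewrite mul1n; apply: leq_trans (leq_addl _ _).
  under eq_bigr => c' _ do rewrite inter_sum.
  exact: nonunit_case.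
rewrite big_split /= sum_nat_const -big_distrl /= sum_bool_card cardsX.
rewrite leq_add2l mulnC leq_mul2l; apply/orP; right.
exact: nonunit_count.
Qed.

Lemma I0_bound :
  (#|A| * #|C| * #|B| <= \sum_(p in setX (sumset B C) (fimage g h A B)) dg p)%N.
Proof.
rewrite /dg exchange_big /= -cardsX -sum_nat_const.
apply: leq_sum => [[x c]]; rewrite in_setX /= => /andP [Hx Hc].
rewrite sum_bool_card.
pose phi := fun y : {unit R} => (val y + val c, val (g x) * (val (h x) + val y)).
have Hinj : injective phi.
  move=> y1 y2 [E _]; apply: val_inj; exact: (addIr _ E).
rewrite -(card_imset B Hinj); apply: subset_leq_card; apply/subsetP => p.
move=> /imsetP [y Hy ->]; rewrite !inE /=.
apply/andP; split; first (apply/andP; split).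
- by apply/imset2P; exists y c.
- by apply/imset2P; exists x y.
- by rewrite /onl /Fl /=; apply/eqP; ring.
Qed.

End Inc.

End MP3.
Import MP3.

Module MP4.
Local Open Scope ring_scope.

Lemma CS (X : finType) (P : {set X}) (e : X -> rat) :
  (\sum_(x in P) e x) ^+ 2 <= #|P|%:R * \sum_(x in P) e x ^+ 2.
Proof.
set D := \sum_(x in P) e x; set S2 := \sum_(x in P) e x ^+ 2; set p := #|P|%:R.
have H0 : 0 <= \sum_(x in P) (p * e x - D) ^+ 2 by apply: sumr_ge0 => x _; exact: sqr_ge0.
have E : \sum_(x in P) (p * e x - D) ^+ 2 = p ^+ 2 * S2 - 2 * p * D * D + p * D ^+ 2.
  rewrite (eq_bigr (fun x => (p ^+ 2 * e x ^+ 2 - (2 * p * D) * e x) + D ^+ 2)); last first.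
    by move=> x _; ring.
  rewrite big_split /= sumrB -!mulr_sumr sumr_const -mulr_natr.
  by rewrite -/D -/S2 -/p; ring.
rewrite E in H0.
have Hp : 0 <= p by rewrite ler0n.
case: (ltrgt0P p) => [Hp'||Hp0]; last first.
- move: Hp0; rewrite /p => /eqP; rewrite pnatr_eq0 cards_eq0 => /eqP HP.
  by rewrite /D /S2 HP !big_set0 expr0n mulr0.
- by rewrite ltNge Hp.
have : 0 <= p * (p * S2 - D ^+ 2) by rewrite (_ : p * (p * S2 - D ^+ 2) = p ^+ 2 * S2 - 2 * p * D * D + p * D ^+ 2) //; ring.
by rewrite pmulr_rge0 // subr_ge0.
Qed.

Lemma core (X : finType) (d : X -> nat) (P : {set X}) (ak N W I0 : nat) :
  #|X| = (N * N)%N -> (\sum_x d x = ak * N)%N -> (\sum_x d x ^ 2 <= ak * (ak + W))%N ->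
  (I0 <= \sum_(x in P) d x)%N -> (2 * #|P| * ak < N * I0)%N ->
  ((N * I0) ^ 2 <= 4 * #|P| * (N * N * (ak * W)))%N.
Proof.
move=> HX HL HQ HI Hc.
set n : rat := N%:R; set a : rat := ak%:R; set p : rat := #|P|%:R.
set Sp : rat := (\sum_(x in P) d x)%:R; set Q : rat := (\sum_x d x ^ 2)%:R.
pose e := fun x => n * (d x)%:R - a.
have HS : \sum_(x in P) e x = n * Sp - p * a.
  rewrite /e sumrB -mulr_sumr sumr_const -mulr_natl /Sp natr_sum //.
have HV : \sum_(x in P) e x ^+ 2 <= \sum_x e x ^+ 2.
  rewrite [X in _ <= X](bigID (mem P)) /= lerDl.
  by apply: sumr_ge0 => x _; exact: sqr_ge0.
have HXe : \sum_x e x ^+ 2 = n ^+ 2 * Q - 2 * n * a * (a * n) + (n * n) * a ^+ 2.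
  rewrite (eq_bigr (fun x => (n ^+ 2 * (d x ^ 2)%:R - (2 * n * a) * (d x)%:R) + a ^+ 2)); last first.
    by move=> x _; rewrite /e natrX; ring.
  rewrite big_split /= sumrB -!mulr_sumr sumr_const -mulr_natr HX.
  rewrite -!natr_sum HL -/Q -mulr_natr !natrM /n /a; ring.
have HCS := CS P e.
rewrite HS in HCS.
have HQr : Q <= a * (a + W%:R) by rewrite /Q -natrD -natrM ler_nat.
have HIr : I0%:R <= Sp by rewrite /Sp ler_nat.
have Hcr : 2 * p * a < n * I0%:R.
  by move: Hc; rewrite -(ltr_nat rat) !natrM.
have Hn : 0 <= n by rewrite ler0n.
have Hp : 0 <= p by rewrite ler0n.
have Ha : 0 <= a by rewrite ler0n.
have HI0 : 0 <= (I0%:R : rat) by rewrite ler0n.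
rewrite -(ler_nat rat) natrX !natrM -/n -/a -/p.
have H1 : n * I0%:R <= 2 * (n * Sp - p * a).
  have : n * I0%:R <= n * Sp by rewrite ler_wpM2l.
  lra.
have H2 : (n * I0%:R) ^+ 2 <= 4 * (n * Sp - p * a) ^+ 2.
  have H0 : 0 <= n * I0%:R by rewrite mulr_ge0.
  rewrite (_ : 4 * (n * Sp - p * a) ^+ 2 = (2 * (n * Sp - p * a)) ^+ 2); last by ring.
  by rewrite ler_sqr ?nnegrE //; lra.
have H3 : \sum_x e x ^+ 2 <= n * n * (a * W%:R).
  rewrite HXe.
  have : n ^+ 2 * Q <= n ^+ 2 * (a * (a + W%:R)) by rewrite ler_wpM2l ?sqr_ge0.
  move=> H; rewrite (_ : n * n * (a * W%:R) = n ^+ 2 * (a * (a + W%:R)) - 2 * n * a * (a * n) + n * n * a ^+ 2); last by ring.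
  lra.
apply: (le_trans H2).
rewrite -!mulrA ler_wpM2l //.
apply: (le_trans HCS); rewrite ler_wpM2l //.
by rewrite mulrA; exact: le_trans HV H3.
Qed.

End MP4.
Import MP4.
Local Open Scope ring_scope.

Theorem theorem1p12 :
  forall r : nat, exists c : rat, 0 < c /\
  forall (R : finComUnitRingType) (z : R),
    finite_valuation_ring R -> uniformizer z -> nilp_degree z r ->
  forall (G : {group {unit R}}) (g h : {unit R} -> {unit R})
         (A B C : {set {unit R}}),
    A \subset G ->
    let q := residue_card z in
    let m := mu G (fun x => val (g x)) in
    c * Num.min ((q ^ r * #|B|)%:R / m%:R)
                ((#|A| * #|B| ^ 2 * #|C|)%:R / ((m ^ 2 * q ^ (2 * r - 1))%:R))
      <= (#|fimage g h A B| * #|sumset B C|)%:R.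
Proof.
move=> r; exists (1 / 4); split; first by [].
move=> R z Hfv Hu Hr G g h A B C HAG; cbv zeta.
set q := residue_card z; set m := mu G (fun x => val (g x)).
have Hnu := nonunit_pideal Hfv Hu.
have HN := cardR Hfv Hu Hr.
have HM := cardM Hfv Hu Hr.
have Hr0 := r_pos Hr.
have Hq2 : (q ^ (2 * r - 1) = #|R| * #|pideal z|)%N.
  by rewrite HN HM -expnD; congr (_ ^ _)%N; lia.
rewrite -/q in HN HM.
rewrite -HN Hq2.
have Hm1 : (0 < m)%N.
  apply: (leq_trans _ (leq_bigmax (val (g 1%g)))).
  by apply/card_gt0P; exists 1%g; rewrite !inE group1 eqxx.
have HNpos : (0 < #|R|)%N by apply/card_gt0P; exists 0.
have HMpos : (0 < #|pideal z|)%N by apply/card_gt0P; exists 0; exact: pideal0.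
set N := #|R|; set Mz := #|pideal z|.
set a := #|A|; set b := #|B|; set k := #|C|.
set P := setX (sumset B C) (fimage g h A B).
have HP : #|P| = (#|fimage g h A B| * #|sumset B C|)%N by rewrite cardsX mulnC.
rewrite -HP.
set p := #|P|.
have Hcase : (N * b <= 2 * p)%N \/ (a * b ^ 2 * k <= 4 * p * (N * (m * Mz)))%N.
  have [Hak|Hak] := posnP (a * k)%N.
    by right; rewrite (_ : (a * b ^ 2 * k = (a * k) * b ^ 2)%N) ?Hak //; lia.
  have [Hc|Hc] := ltnP (2 * p * (a * k))%N (N * (a * k * b))%N.
    right.
    have := core (X := (R * R)%type) (d := dg g h A C) (P := P) (ak := (a * k)%N) (N := N)
       (W := (N * (m * Mz))%N) (I0 := (a * k * b)%N)
       ltac:(by rewrite card_prod)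
       ltac:(by rewrite sum_dg)
       ltac:(exact: (sum_dg2 g h C HAG Hnu))
       ltac:(by rewrite -/P; exact: I0_bound)
       Hc.
    move=> H.
    have H' : (N * N * (a * k) * (a * b ^ 2 * k) <= N * N * (a * k) * (4 * p * (N * (m * Mz))))%N.
      move: H; set W := (N * (m * Mz))%N.
      by rewrite (_ : ((N * (a * k * b)) ^ 2 = N * N * (a * k) * (a * b ^ 2 * k))%N); [|lia];
         rewrite (_ : (4 * p * (N * N * (a * k * W)) = N * N * (a * k) * (4 * p * W))%N); [|lia].
    have Hpos : (0 < N * N * (a * k))%N by rewrite muln_gt0 Hak andbT muln_gt0 HNpos.
    by rewrite leq_pmul2l in H'.
  left.
  have H' : (a * k * (N * b) <= a * k * (2 * p))%N.
    by move: Hc; rewrite (_ : (N * (a * k * b) = a * k * (N * b))%N); [|lia];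
       rewrite (_ : (2 * p * (a * k) = a * k * (2 * p))%N); [|lia].
  by rewrite leq_pmul2l in H'.
have Hmr : (0 : rat) < m%:R by rewrite ltr0n.
have Hpr : (0 : rat) <= p%:R by rewrite ler0n.
suff : Num.min ((N * b)%:R / m%:R) ((a * b ^ 2 * k)%:R / (m ^ 2 * (N * Mz))%:R) <= 4 * (p%:R : rat).
  by move=> H; lra.
rewrite ge_min; apply/orP; case: Hcase => Hc; [left|right].
  rewrite ler_pdivrMr // -natrM -natrM ler_nat.
  by apply: (leq_trans Hc); nia.
have Hd : (0 : rat) < (m ^ 2 * (N * Mz))%:R by rewrite ltr0n; nia.
rewrite ler_pdivrMr // -natrM -natrM ler_nat.
apply: (leq_trans Hc).
rewrite (_ : (4 * p * (m ^ 2 * (N * Mz)) = (4 * p * (N * (m * Mz))) * m)%N); [|lia].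
by rewrite leq_pmulr.
Qed.
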